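(* Let $F$ be a saturated minimally unsatisfiable clause-set, $v$ a singular variable for $F$, and $F' := \mathrm{DP}_v(F)$. 1. For all literals $x$, $\mathrm{ldeg}_{F'}(x)\le\mathrm{ldeg}_F(x)$. 2. Consequently, if $w\neq v$ is a singular variable for $F$, then $w$ is also singular for $F'$.
   Context: Literals are variables $v$ and complements $\overline{v}$; a clause is a finite set of literals with no complementary pair; a clause-set is a finite set of clauses; $\mathrm{var}(F)$ is the set of variables of $F$; $\mathrm{ldeg}_F(x)$ is the number of clauses of $F$ containing literal $x$. $\mathrm{DP}_v(F) := \{C \in F : v \notin \mathrm{var}(C)\} \cup \{(C \cup D)\setminus\{v,\overline{v}\} : C, D \in F,\ C \cap \overline{D} = \{v\}\}$. A minimally unsatisfiable $F$ is saturated if for every $C \in F$ and every literal $y$ with $\mathrm{var}(y) \in \mathrm{var}(F)\setminus \mathrm{var}(C)$, the clause-set $(F\setminus\{C\})\cup\{C\cup\{y\}\}$ is satisfiable. A variable $v$ is singular for $F$ if $\min(\mathrm{ldeg}_F(v),\mathrm{ldeg}_F(\overline{v}))=1$. *)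

(* Defs.v *)
From mathcomp Require Import all_boot all_order.
From mathcomp Require Import finmap.
Set Implicit Arguments. Unset Strict Implicit. Unset Printing Implicit Defensive.
Local Open Scope fset_scope.

Definition var := nat.
Definition lit := (nat * bool)%type.
Definition pos (v : var) : lit := (v, true).
Definition neg (v : var) : lit := (v, false).
Definition compl (x : lit) : lit := (x.1, ~~ x.2).
Definition varl (x : lit) : var := x.1.

Definition clause := {fset lit}.
Definition clauseset := {fset clause}.

Definition clause_ok (C : clause) : Prop := forall x, x \in C -> compl x \notin C.
Definition clauseset_ok (F : clauseset) : Prop := forall C, C \in F -> clause_ok C.

Definition varC (C : clause) : {fset var} := [fset varl x | x in C].
Definition varF (F : clauseset) : {fset var} := \bigcup_(C <- F) varC C.

Definition ldeg (F : clauseset) (x : lit) : nat := #|` [fset C in F | x \in C]|.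

Definition sat_lit (a : var -> bool) (x : lit) : bool := a x.1 == x.2.
Definition sat_clause (a : var -> bool) (C : clause) : Prop :=
  exists2 x, x \in C & sat_lit a x.
Definition satisfiable (F : clauseset) : Prop :=
  exists a : var -> bool, forall C, C \in F -> sat_clause a C.

Definition minunsat (F : clauseset) : Prop :=
  clauseset_ok F /\ ~ satisfiable F /\
  (forall C, C \in F -> satisfiable (F `\ C)).

Definition saturated (F : clauseset) : Prop :=
  minunsat F /\
  forall C y, C \in F -> varl y \in varF F -> varl y \notin varC C ->
    satisfiable ((F `\ C) `|` [fset C `|` [fset y]]).

Definition complC (D : clause) : clause := [fset compl y | y in D].

Definition DP (v : var) (F : clauseset) : clauseset :=
  [fset C in F | v \notin varC C] `|`
  [fset (C `|` D) `\` [fset pos v; neg v] | C in F, D in F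
     & C `&` complC D == [fset pos v]].

Definition singular (v : var) (F : clauseset) : Prop :=
  minn (ldeg F (pos v)) (ldeg F (neg v)) = 1%N.

(* Main.v *)
Require Import Defs.
From mathcomp Require Import all_boot all_order.
From mathcomp Require Import finmap zify.
Local Open Scope fset_scope.

Lemma in_sepE (T : choiceType) (A : {fset T}) (P : pred T) x :
  (x \in [fset y in A | P y]) = (x \in A) && P x.
Proof. by rewrite !inE. Qed.

Lemma compl_compl x : compl (compl x) = x.
Proof. by case: x => a b; rewrite /compl /= negbK. Qed.

Lemma in_complC x D : (x \in complC D) = (compl x \in D).
Proof.
apply/imfsetP/idP => [[y yD ->]|H]; first by rewrite compl_compl.
by exists (compl x) => //; rewrite compl_compl.
Qed.

Lemma same_var x y : x.1 = y.1 -> x != y -> y = compl x.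
Proof.
case: x => a b; case: y => c d /= <-; rewrite /compl /=.
by case: b; case: d; rewrite ?eqxx.
Qed.

Lemma inV v z : z \in [fset pos v; neg v] -> z.1 = v.
Proof. by rewrite !inE => /orP[/eqP->|/eqP->]. Qed.

Lemma varC_in C z : z \in C -> z.1 \in varC C.
Proof. by move=> zC; apply/imfsetP; exists z. Qed.

Definition Setting F v b C0 :=
  [/\ saturated F, C0 \in F, (forall G, G \in F -> (v,b) \in G -> G = C0)
    & (v,b) \in C0].

Lemma key F v b C0 D y : Setting F v b C0 ->
  D \in F -> (v,~~b) \in D -> y \in C0 -> y != (v,b) -> y \in D.
Proof.
move=> [[[ok [unsat mu]] sat] C0F uniq lC0] DF lD yC0 ylb.
have yv : y.1 != v.
  apply/eqP => yv; have := ok _ C0F _ lC0.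
  have -> : compl (v, b) = y; last by rewrite yC0.
  rewrite (same_var (v,b) y) //; last by rewrite eq_sym.
apply/idPn => yD.
have noD : forall a, (forall G, G \in F -> G != D -> sat_clause a G) ->
    ~ sat_clause a D.
  move=> a H HD; apply: unsat; exists a => G GF.
  by case: (eqVneq G D) => [->|GD] //; apply: H.
have [a [Ha1 Ha2]] : exists a, (forall G, G \in F -> G != D -> sat_clause a G)
    /\ sat_lit a y.
  case: (boolP (varl y \in varC D)) => [yvD | yvD].
    have cyD : compl y \in D.
      move/imfsetP: yvD => [z zD yz].
      have -> : compl y = z; last by [].
      by rewrite (same_var y z) //; apply: contraNneq yD => ->.
    have [a Ha] := mu D DF.
    have H1 : forall G, G \in F -> G != D -> sat_clause a G.
      by move=> G GF GD; apply: Ha; rewrite in_fsetD1 GD GF.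
    exists a; split => //.
    apply/negP => ny; apply: (noD a H1); exists (compl y) => //.
    move: ny; rewrite /sat_lit /=.
    by case: (a y.1); case: y.2.
  have yF : varl y \in varF F.
    by apply/bigfcupP; exists C0; rewrite ?C0F //; apply: varC_in.
  have [a Ha] := sat D y DF yF yvD.
  have H1 : forall G, G \in F -> G != D -> sat_clause a G.
    by move=> G GF GD; apply: Ha; rewrite in_fsetU in_fsetD1 GD GF.
  exists a; split => //.
  have := Ha (D `|` [fset y]); rewrite in_fsetU in_fset1 eqxx orbT.
  case=> // z; rewrite in_fsetU in_fset1 => /orP[zD|/eqP->] // sz.
  by exfalso; apply: (noD a H1); exists z.
apply: unsat; exists (fun u => if u == v then ~~b else a u) => G GF.
case: (boolP ((v,~~b) \in G)) => [vG|nvG].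
  by exists (v,~~b) => //; rewrite /sat_lit /= eqxx.
case: (eqVneq G C0) => [->|GC0].
  by exists y => //; rewrite /sat_lit (negbTE yv).
have GD : G != D by apply: contraNneq nvG => ->.
have [z zG sz] := Ha1 G GF GD.
exists z => //; rewrite /sat_lit.
case: (eqVneq z.1 v) => [zv|zv]; last by [].
exfalso; move: zG; case: z zv {sz} => z1 z2 /= ->.
case: (eqVneq z2 b) => [->|neq] zG.
  by move: GC0; rewrite (uniq G GF zG) eqxx.
have e : z2 = ~~b by move: neq; clear; destruct z2, b.
by move: nvG; rewrite -e zG.
Qed.

Arguments key {F v b C0 D y}.

Notation VV v := [fset pos v; neg v].

Lemma noV v E : v \notin varC E -> E `\` VV v = E.
Proof.
move=> vE; apply/fsetP => z; rewrite in_fsetD.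
case zV: (z \in VV v) => //=; apply/esym/negP => zE.
by move: vE; rewrite -(@inV v z zV) varC_in.
Qed.

Lemma res_shape F v b C0 C D : Setting F v b C0 ->
  C \in F -> D \in F -> C `&` complC D == [fset pos v] ->
  exists2 G, G \in F & (C `|` D) `\` VV v = G `\` VV v.
Proof.
move=> S CF DF /eqP H.
have : pos v \in C `&` complC D by rewrite H in_fset1.
rewrite in_fsetI in_complC => /andP[pC nD].
have S' := S; case: S' => _ C0F uniq _.
case: b S uniq => S uniq.
  have eC := uniq C CF pC; subst C.
  exists D => //; apply/fsetP => z; rewrite !in_fsetD.
  case zV: (z \in VV v) => //=; rewrite in_fsetU.
  apply/idP/idP => [/orP[zC|//]|->]; last by rewrite orbT.
  apply: (key S DF nD zC).
  by apply: contraFneq zV => ->; rewrite !inE eqxx.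
have eD := uniq D DF nD; subst D.
exists C => //; apply/fsetP => z; rewrite !in_fsetD.
case zV: (z \in VV v) => //=; rewrite in_fsetU.
apply/idP/idP => [/orP[//|zC]|->]; last by [].
apply: (key S CF pC zC).
by apply: contraFneq zV => ->; rewrite !inE eqxx orbT.
Qed.

Arguments res_shape {F v b C0 C D}.

Lemma part1 F v b C0 x : Setting F v b C0 -> ldeg (DP v F) x <= ldeg F x.
Proof.
move=> S; rewrite /ldeg.
have sub : [fset E in DP v F | x \in E] `<=`
    [fset G `\` VV v | G in [fset C in F | x \in C]].
  apply/fsubsetP => E; rewrite inE => /andP[EDP xE]; apply/imfsetP.
  move: EDP; rewrite /DP in_fsetU => /orP[|].
    rewrite inE => /andP[EF vE]; exists E; first by rewrite !inE /=; apply/andP.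
    by rewrite noV.
  case/imfset2P => [C CF [D]]; rewrite inE => /andP[DF H] EE.
  have [G GF GE] := res_shape S CF DF H.
  exists G; last by rewrite EE GE.
  by rewrite !inE /=; apply/andP; split => //; move: xE; rewrite EE GE in_fsetD => /andP[].
apply: leq_trans (fsubset_leq_card sub) (leq_trans (leq_imfset_card _ _ _) _).
by [].
Qed.

Lemma resolv_in F v b C0 G : Setting F v b C0 -> G \in F -> (v,~~b) \in G ->
  forall z, z \in C0 `|` G -> z \notin VV v -> exists2 E, E \in DP v F & z \in E.
Proof.
move=> S GF lG z zU zV.
have S' := S; case: S' => [[[ok _] _] C0F uniq lC0].
have okG := ok G GF.
case: b S uniq lC0 lG => S uniq lC0 lG.
  exists ((C0 `|` G) `\` VV v); last by rewrite in_fsetD zV.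
  rewrite /DP in_fsetU; apply/orP; right; apply/imfset2P; exists C0 => //.
  exists G => //; rewrite !inE /=; apply/andP; split => //.
  apply/eqP/fsetP => w; rewrite in_fsetI in_complC in_fset1.
  case: (eqVneq w (pos v)) => [->|wne]; first by rewrite lC0.
  apply/negbTE/negP => /andP[wC0 cwG].
  have wG := key S GF lG wC0 wne.
  by move: (okG _ wG); rewrite cwG.
exists ((G `|` C0) `\` VV v); last by rewrite in_fsetD zV in_fsetU orbC -in_fsetU.
rewrite /DP in_fsetU; apply/orP; right; apply/imfset2P; exists G => //.
exists C0 => //; rewrite !inE /=; apply/andP; split => //.
apply/eqP/fsetP => w; rewrite in_fsetI in_complC in_fset1.
case: (eqVneq w (pos v)) => [->|wne]; first by rewrite lG.
apply/negbTE/negP => /andP[wG cwC0].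
have cwne : compl w != (v,false).
  by apply: contra_neq wne => e; rewrite -(compl_compl w) e.
have := key S GF lG cwC0 cwne.
by move: (okG _ wG) => /negbTE ->.
Qed.

Arguments resolv_in {F v b C0 G}.

Lemma occurs F v b C0 D0 x : Setting F v b C0 -> D0 \in F -> (v,~~b) \in D0 ->
  x.1 != v -> 0 < ldeg F x -> 0 < ldeg (DP v F) x.
Proof.
move=> S D0F lD0 xv; rewrite /ldeg !cardfs_gt0 => /fset0Pn [G].
rewrite !inE /= => /andP[GF xG].
have xV : x \notin VV v by apply: contra xv => /inV ->; rewrite eqxx.
suff [E EDP xE] : exists2 E, E \in DP v F & x \in E.
  by apply/fset0Pn; exists E; rewrite in_sepE EDP xE.
have S' := S; case: S' => _ C0F uniq _.
case: (boolP (v \in varC G)) => vG; last first.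
  exists G => //; rewrite /DP in_fsetU; apply/orP; left.
  by rewrite in_sepE GF vG.
move/imfsetP: vG => [l lG vl].
case: (eqVneq l.2 b) => e.
  have lE : l = (v,b) by move: e vl {lG}; case: l => l1 l2 /= -> ->.
  rewrite lE in lG; have eG := uniq G GF lG; subst G.
  by apply: (resolv_in S D0F lD0) => //; rewrite in_fsetU xG.
have lE : l = (v,~~b).
  case: l e vl lG => l1 l2 /= e -> _. by move: e; clear; destruct l2, b.
rewrite lE in lG.
by apply: (resolv_in S GF lG) => //; rewrite in_fsetU xG orbT.
Qed.

Arguments occurs {F v b C0 D0} x.
Arguments part1 {F v b C0} x.

Theorem corollary26 (F : clauseset) (v : var) :
  saturated F -> singular v F ->
  (forall x : lit, ldeg (DP v F) x <= ldeg F x) /\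
  (forall w : var, w <> v -> singular w F -> singular w (DP v F)).
Proof.
move=> Hsat Hsing.
have [b [C0 [S [D0 [D0F lD0]]]]] : exists b C0, Setting F v b C0 /\
    exists D0, D0 \in F /\ (v,~~b) \in D0.
  have H1 : forall b, ldeg F (v,b) = 1 -> 0 < ldeg F (v,~~b) ->
      exists C0, Setting F v b C0 /\ exists D0, D0 \in F /\ (v,~~b) \in D0.
    move=> b e1 g1.
    move/eqP/cardfs1P: e1 => [C0 HC0].
    have : C0 \in [fset C in F | (v,b) \in C] by rewrite HC0 in_fset1.
    rewrite !inE /= => /andP[C0F lC0].
    move: g1; rewrite /ldeg cardfs_gt0 => /fset0Pn [D0].
    rewrite !inE /= => /andP[D0F lD0].
    exists C0; split; last by exists D0.
    split => // G GF lG.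
    have : G \in [fset C in F | (v,b) \in C] by rewrite !inE /=; apply/andP.
    by rewrite HC0 in_fset1 => /eqP.
  move: Hsing; rewrite /singular /pos /neg => Hs.
  have [e|e] : ldeg F (v,true) = 1 \/ ldeg F (v,false) = 1 by lia.
    by exists true; apply: H1 => //=; lia.
  by exists false; apply: H1 => //=; lia.
split; first by move=> x; apply: part1 S.
move=> w wv; rewrite /singular => Hw.
have h1 := part1 (pos w) S; have h2 := part1 (neg w) S.
have wv' : w != v by apply/eqP.
have p1 : 0 < ldeg F (pos w) by lia.
have p2 : 0 < ldeg F (neg w) by lia.
have g1 := occurs (pos w) S D0F lD0 wv' p1.
have g2 := occurs (neg w) S D0F lD0 wv' p2.
lia.
Qed.
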